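(* Let $q$ be a power of an odd prime, let $r\ge1$ be an integer and $t=2r+1$. If for some $\mu\in\mathbb{F}_q$ the polynomial $x^{2r+1}-\mu\in\mathbb{F}_q[x]$ is irreducible, then \[ \chi(G_{q^t})\le\frac{2r+5}{3}\,q^{\frac{4r}{3}+1}+(2r+1)q^{r+1}. \]
   Context: For a power $Q$ of an odd prime, the graph $G_Q$ has vertex set $\mathbb{F}_Q\times\mathbb{F}_Q$, and distinct vertices $(x_1,x_2)$, $(y_1,y_2)$ are adjacent if and only if $(x_1+y_1)^2=x_2+y_2$; $G_Q$ has no loops. $\chi$ denotes the chromatic number. *)

(* Defs.v *)
From Stdlib Require Import Reals.
From HB Require Import structures.
From mathcomp Require Import all_boot all_order all_algebra all_field.
Set Implicit Arguments. Unset Strict Implicit. Unset Printing Implicit Defensive.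
Import GRing.Theory.

Definition colorableb (V : finType) (e : rel V) (k : nat) : bool :=
  [exists f : {ffun V -> 'I_k},
     [forall x, forall y, ((x != y) && e x y) ==> (f x != f y)]].

Lemma colorable_exists (V : finType) (e : rel V) : exists k, colorableb e k.
Proof.
exists #|V|; apply/existsP; exists [ffun x => enum_rank x].
apply/forallP => x; apply/forallP => y; apply/implyP => /andP [nxy _].
rewrite !ffunE; apply: contra nxy => /eqP H; apply/eqP; exact: enum_rank_inj.
Qed.

Definition chromatic_number (V : finType) (e : rel V) : nat :=
  ex_minn (colorable_exists e).

Definition G_adj (K : finFieldType) : rel (K * K)%type :=
  fun u v => (u != v) && ((u.1 + v.1) ^+ 2 == u.2 + v.2)%R.
Arguments G_adj K : clear implicits.

(* Main.v *)
Require Import Defs.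
From Stdlib Require Import Reals Lra.
From HB Require Import structures.
From mathcomp Require Import all_boot all_order all_algebra all_field.
From mathcomp Require Import ring zify cyclic.
Set Implicit Arguments. Unset Strict Implicit. Unset Printing Implicit Defensive.
Import GRing.Theory.
Import Pdiv.CommonRing Pdiv.RingMonic Pdiv.Field.
Local Open Scope ring_scope.
Section ECol.
Variables (F : finFieldType) (r : nat) (mu : F).
Let t := (2 * r + 1)%N.
Let P : {poly F} := 'X^t - mu%:P.
Hypothesis hI : monic_irreducible_poly P.
Let E := {poly %/ P with hI}.

Lemma sizeP : size P = t.+1.
Proof. by rewrite size_XnsubC // /t addn1. Qed.

Lemma sizeE (x : E) : (size (x : {poly F}) <= t)%N.
Proof. rewrite -ltnS; apply: (leq_trans (size_mk_monic x)). have -> : mk_monic P = P by apply: mk_monicE. by rewrite sizeP. Qed.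

Lemma mulE (x y : E) : ((x * y : E) : {poly F}) = rmodp ((x : {poly F}) * y) P.
Proof. rewrite poly_of_qpolyM; congr rmodp; exact: mk_monicE. Qed.

Lemma addE (x y : E) : ((x + y : E) : {poly F}) = (x : {poly F}) + y.
Proof. by []. Qed.
Lemma subE (x y : E) : ((x - y : E) : {poly F}) = (x : {poly F}) - y.
Proof. by []. Qed.

Lemma monP : P \is monic.
Proof. by apply: monicXnsubC; rewrite /t addn1. Qed.

Lemma coef_red (c : {poly F}) m : (size c <= 2 * t)%N -> (m < t)%N ->
  (rmodp c P)`_m = c`_m + mu * c`_(m + t).
Proof.
move=> sc mt.
have eq : c = drop_poly t c * P + (take_poly t c + mu *: drop_poly t c).
  rewrite /P mulrBr -mul_polyC.
  rewrite -{1}(poly_take_drop t c).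
  rewrite [_ * mu%:P]mulrC. ring.
rewrite {1}eq rmodp_addl_mul_small; last first.
  rewrite sizeP ltnS (leq_trans (size_polyD _ _)) // geq_max size_take_poly.
  rewrite (leq_trans (size_scale_leq _ _)) // size_drop_poly leq_subLR.
  by rewrite mulSn mul1n in sc.
  exact: monP.
by rewrite coefD coefZ coef_take_poly mt coef_drop_poly.
Qed.


Hypothesis r_gt0 : (0 < r)%N.

Definition m1 (a : nat) := if a == 0%N then (2 * r - 1)%N else (2 * a - 2)%N.
Definition m2 (a : nat) := if a == 0%N then (2 * r)%N else (2 * a - 1)%N.
Definition idx (a s : nat) := if (s < a)%N then s else (s + r)%N.

Lemma conv0 (v : E) (a e : nat) :
  (forall i, (i < a)%N || (a + r <= i)%N -> (v : {poly F})`_i = 0) ->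
  ~~ ((2 * a <= e)%N && (e <= 2 * a + 2 * r - 2)%N) ->
  ((v : {poly F}) * v)`_e = 0.
Proof.
move=> supp he; rewrite coefM big1 // => j _.
have [hj|hj] := boolP ((j < a)%N || (a + r <= j)%N).
  by rewrite supp ?mul0r.
have hj' : (j <= e)%N by rewrite -ltnS.
rewrite (supp (e - j)%N) ?mulr0 //.
move: hj he; rewrite negb_or negb_and -!leqNgt -!ltnNge => /andP[h1 h2] h3.
apply/orP; case/orP: h3 => h3; [left|right]; lia.
Qed.

Lemma sq_coef (v : E) (a : nat) : (a <= r)%N ->
  (forall i, (i < a)%N || (a + r <= i)%N -> (v : {poly F})`_i = 0) ->
  ((v * v : E) : {poly F})`_(m1 a) = 0 /\ ((v * v : E) : {poly F})`_(m2 a) = 0.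
Proof.
move=> ar supp.
have sz : (size ((v : {poly F}) * v)%R <= 2 * t)%N.
  apply: (leq_trans (size_mul_leq _ _)).
  have := sizeE v; rewrite /t; lia.
have hm : (m1 a < t)%N /\ (m2 a < t)%N by rewrite /m1 /m2 /t; case: eqP; lia.
have c0 := conv0 supp.
rewrite mulE; split; rewrite coef_red ?hm.1 ?hm.2 //;
  rewrite !c0 ?mulr0 ?addr0 //; rewrite /m1 /m2 /t; case: eqP => ?;
  rewrite negb_and -!ltnNge; apply/orP; lia.
Qed.


Lemma coef_big (z : E) i : (t <= i)%N -> (z : {poly F})`_i = 0.
Proof. by move=> ti; rewrite nth_default // (leq_trans (sizeE z)). Qed.

Lemma cover (z : E) :
  (forall a : 'I_r.+1, (z : {poly F})`_(m1 a) = 0 /\ (z : {poly F})`_(m2 a) = 0) ->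
  z = 0.
Proof.
move=> H; apply/val_inj/polyP => i; rewrite coef0.
have [ti|it] := leqP t i; first exact: coef_big.
have [hi|hi] := leqP (2 * r - 1)%N i.
  have [h1 h2] := H ord0; rewrite /m1 /m2 /= in h1 h2.
  have [e|e] := eqVneq i (2 * r - 1)%N; first by rewrite e.
  by have -> : i = (2 * r)%N by move: e => /eqP; rewrite /t in it; lia.
have ai : (i./2.+1 < r.+1)%N.
  have := odd_double_half i; rewrite -mul2n; case: (odd i) => /=; lia.
have [h1 h2] := H (Ordinal ai); rewrite /m1 /m2 /= in h1 h2.
have := odd_double_half i; rewrite -mul2n; case: (odd i) => /= e.
  by have -> : i = (2 * i./2.+1 - 1)%N by lia.
by have -> : i = (2 * i./2.+1 - 2)%N by lia.
Qed.

Lemma cls_supp (x y : E) (a : nat) : (a <= r)%N ->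
  (forall s : 'I_r.+1, (x : {poly F})`_(idx a s) = (y : {poly F})`_(idx a s)) ->
  forall i, (i < a)%N || (a + r <= i)%N -> ((x - y : E) : {poly F})`_i = 0.
Proof.
move=> ar H i hi; rewrite subE coefB; apply/eqP; rewrite subr_eq0; apply/eqP.
have [ti|it] := leqP t i; first by rewrite !coef_big.
case/orP: hi => hi.
  have si : (i < r.+1)%N by lia.
  by have := H (Ordinal si); rewrite /idx /= hi.
have si : (i - r < r.+1)%N by rewrite /t in it; lia.
have := H (Ordinal si); rewrite /idx /=.
have -> : (i - r < a)%N = false by apply/negbTE; rewrite -leqNgt; lia.
by rewrite subnK //; lia.
Qed.


Hypothesis two_nz : (2%:R : F) != 0.

Definition half (z : (F * F)%type) := (enum_rank z < enum_rank (- z))%N.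
Definition wv (x : (E * E)%type) : E := x.2 - 2%:R * x.1 ^+ 2.
Definition pr (a : nat) (z : E) : (F * F)%type :=
  ((z : {poly F})`_(m1 a), (z : {poly F})`_(m2 a)).
Definition colT := option ('I_r.+1 * {ffun 'I_r.+1 -> F} * bool)%type.
Definition col (x : (E * E)%type) : colT :=
  if [pick a : 'I_r.+1 | pr a (wv x) != 0] is Some a then
    Some (a, [ffun s : 'I_r.+1 => (x.1 : {poly F})`_(idx a s)], half (pr a (wv x)))
  else None.

Lemma prD a (u w : E) : pr a (u + w) = pr a u + pr a w.
Proof. by rewrite /pr !addE !coefD. Qed.

Lemma pr0 a : pr a 0 = 0.
Proof. rewrite /pr; apply/eqP; rewrite xpair_eqE; apply/andP; split; apply/eqP; exact: coef0. Qed.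

Lemma half_contra (z : (F * F)%type) : z != 0 -> half z = half (- z) -> False.
Proof.
move=> nz; rewrite /half opprK.
have [lt|ge] := ltnP (enum_rank z) (enum_rank (- z)).
  by move/esym/idP; rewrite ltnNge ltnW.
move=> /esym/negbT; rewrite -leqNgt => le.
have ee : enum_rank z = enum_rank (- z) by apply/val_inj/eqP; rewrite eqn_leq le ge.
have zz := enum_rank_inj ee; clear ge le ee.
move: nz; case: z zz => [c d] zz.
have /= /eqP hc := congr1 fst zz; have /= /eqP hd := congr1 snd zz.
have c0 : c = 0.
  by move: hc; rewrite -subr_eq0 opprK -mulr2n -mulr_natr mulf_eq0 (negbTE two_nz) orbF => /eqP.
have d0 : d = 0.
  by move: hd; rewrite -subr_eq0 opprK -mulr2n -mulr_natr mulf_eq0 (negbTE two_nz) orbF => /eqP.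
by rewrite c0 d0 eqxx.
Qed.

Lemma col_ok (x y : (E * E)%type) : G_adj E x y -> col x != col y.
Proof.
move=> /andP [nxy /eqP adj].
have key : wv x + wv y + (x.1 - y.1) ^+ 2 = 0.
  rewrite /wv (_ : x.2 = (x.1 + y.1) ^+ 2 - y.2); last by rewrite adj addrK.
  ring.
rewrite /col; case: pickP => [a Ha | Hx]; case: pickP => [b Hb | Hy] //.
  apply/negP => /eqP [eab ecl eh]; subst b.
  have H (s : 'I_r.+1) : (x.1 : {poly F})`_(idx a s) = (y.1 : {poly F})`_(idx a s).
    by have := congr1 (fun f : {ffun 'I_r.+1 -> F} => f s) ecl; rewrite !ffunE.
  have supp := cls_supp (ltnSE (ltn_ord a)) H.
  have [s1 s2] := sq_coef (ltnSE (ltn_ord a)) supp.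
  have e : pr a (wv x) + pr a (wv y) = 0.
    have := congr1 (pr a) key; rewrite !prD pr0 expr2.
    have -> : pr a ((x.1 - y.1) * (x.1 - y.1)) = 0.
      by rewrite /pr s1 s2; apply/eqP; rewrite xpair_eqE !eqxx.
    by rewrite addr0.
  apply: (half_contra Ha); rewrite eh; congr half.
  by rewrite -[pr a (wv y)](addKr (pr a (wv x))) e addr0.
apply/negP => _.
have wx : wv x = 0.
  apply: cover => a; have /negbT := Hx a; rewrite negbK => /eqP e.
  by split; [exact: (congr1 fst e) | exact: (congr1 snd e)].
have wy : wv y = 0.
  apply: cover => a; have /negbT := Hy a; rewrite negbK => /eqP e.
  by split; [exact: (congr1 fst e) | exact: (congr1 snd e)].
move: key; rewrite wx wy !add0r => /eqP; rewrite expf_eq0 /= subr_eq0 => /eqP e1.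
move: wx wy; rewrite /wv e1 => /eqP; rewrite subr_eq0 => /eqP e2 /eqP; rewrite subr_eq0 => /eqP e3.
by clear -nxy e1 e2 e3; move: nxy; case: x y e1 e2 e3 => [x1 x2] [y1 y2] /= -> -> ->; rewrite eqxx.
Qed.


Lemma colorE : colorableb (G_adj E) #|{: colT}|.
Proof.
apply/existsP; exists [ffun x => enum_rank (col x)].
apply/forallP => x; apply/forallP => y; apply/implyP => /andP [_ adj].
rewrite !ffunE; apply: contra (col_ok adj) => /eqP h; apply/eqP.
exact: enum_rank_inj h.
Qed.

Lemma card_colT : #|{: colT}| = (r.+1 * #|F| ^ r.+1 * 2).+1.
Proof. by rewrite card_option !card_prod card_ord card_ffun card_ord card_bool. Qed.

End ECol.

Lemma colorable_transfer (K E : finFieldType) (f : K -> E) n :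
  (forall x y, f (x + y) = f x + f y) -> (forall x y, f (x * y) = f x * f y) ->
  injective f -> colorableb (G_adj E) n -> colorableb (G_adj K) n.
Proof.
move=> fD fM finj /existsP [c /forallP Hc].
apply/existsP; exists [ffun x => c (f x.1, f x.2)].
apply/forallP => x; apply/forallP => y; apply/implyP => /andP [_ /andP [nxy /eqP adj]].
rewrite !ffunE.
have := Hc (f x.1, f x.2) => /forallP /(_ (f y.1, f y.2)) /implyP; apply.
have ne : (f x.1, f x.2) != (f y.1, f y.2).
  apply: contra nxy; rewrite xpair_eqE => /andP [/eqP /finj e1 /eqP /finj e2].
  by case: x y e1 e2 {adj} => [x1 x2] [y1 y2] /= -> ->.
by rewrite ne /G_adj /= ne /= -fD !expr2 -fM -fD -expr2 adj.
Qed.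

Lemma chrom_le (V : finType) (e : rel V) n : colorableb e n -> (chromatic_number e <= n)%N.
Proof. by rewrite /chromatic_number; case: ex_minnP => m _ H /H. Qed.



Section FpMorph.
Variables (p : nat) (R : nzRingType).
Hypotheses (chR : p \in [pchar R]).

Definition fp (_ : p \in [pchar R]) (c : 'F_p) : R := (c : nat)%:R.

Let pP : prime p := GRing.pcharf_prime chR.

Lemma fpD (a b : 'F_p) : fp chR (a + b) = fp chR a + fp chR b.
Proof.
rewrite /fp -{1}(natr_Zp a) -{1}(natr_Zp b) -natrD val_Fp_nat //.
by rewrite GRing.natr_mod_pchar // natrD.
Qed.

Lemma fpM (a b : 'F_p) : fp chR (a * b) = fp chR a * fp chR b.
Proof.
rewrite /fp -{1}(natr_Zp a) -{1}(natr_Zp b) -natrM val_Fp_nat //.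
by rewrite GRing.natr_mod_pchar // natrM.
Qed.

Lemma fp1 : fp chR 1 = 1.
Proof. by rewrite /fp -[1 : 'F_p]/(1%:R) val_Fp_nat // modn_small // prime_gt1. Qed.

Lemma fp_zmod : zmod_morphism (fp chR).
Proof. by move=> a b; apply/eqP; rewrite eq_sym subr_eq -fpD subrK. Qed.

Lemma fp_monoid : monoid_morphism (fp chR).
Proof. by split; [exact: fp1 | exact: fpM]. Qed.

HB.instance Definition _ := GRing.isZmodMorphism.Build 'F_p R (fp chR) fp_zmod.
HB.instance Definition _ := GRing.isMonoidMorphism.Build 'F_p R (fp chR) fp_monoid.
End FpMorph.


Section Embed.
Variables (p : nat) (K E : finFieldType).
Hypotheses (chK : p \in [pchar K]) (chE : p \in [pchar E]) (cardKE : #|K| = #|E|).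
Let N := #|K|.
Let fK := fp chK.
Let fE := fp chE.

Lemma N_gt1 : (1 < N)%N.
Proof. exact: finNzRing_gt1. Qed.

Lemma prim_ex : exists a : K, (N.-1).-primitive_root a.
Proof.
have n0 : (0 < N.-1)%N by have := N_gt1; rewrite /N; case: #|K| => [|[]].
have : has (N.-1).-primitive_root (enum (predC1 (0 : K))).
  apply: has_prim_root => //.
  - apply/allP => x; rewrite mem_enum /= => nx; rewrite unity_rootE.
    have := expf_card x; rewrite -/N -(ltn_predK N_gt1) exprSr => h.
    by apply/eqP; apply: (mulIf nx); rewrite mul1r.
  - exact: enum_uniq.
  - by rewrite -cardE cardC1.
by case/hasP => a _ pa; exists a.
Qed.

Lemma expN1 (x : K) : x != 0 -> x ^+ N.-1 = 1.
Proof.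
move=> nx; have := expf_card x; rewrite -/N -(ltn_predK N_gt1) exprSr => h.
by apply: (mulIf nx); rewrite mul1r.
Qed.

Section WithA.
Variable a : K.
Hypothesis pa : (N.-1).-primitive_root a.

Definition Sp := [pred h : {poly_(N.+2) 'F_p} |
  ((h : {poly 'F_p}) != 0) && root (map_poly fK h) a].

Definition h0 : {poly_(N.+2) 'F_p} := npolyp N.+2 ('X^N - 'X).

Lemma XNX_size : size ('X^N - 'X : {poly 'F_p}) = N.+1.
Proof.
by rewrite size_polyDl ?size_polyXn // size_polyN size_polyX ltnS N_gt1.
Qed.

Lemma h0S : h0 \in Sp.
Proof.
rewrite inE /h0 npolypK; last by rewrite XNX_size.
rewrite -size_poly_gt0 XNX_size /= /root rmorphB /= map_polyXn map_polyX.
by rewrite hornerD hornerN hornerXn hornerX expf_card subrr.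
Qed.

Definition g : {poly 'F_p} := [arg min_(h < h0 in Sp) size (h : {poly 'F_p})].

Lemma gP : [/\ g != 0, root (map_poly fK g) a &
  forall h : {poly_(N.+2) 'F_p}, h \in Sp -> (size g <= size (h : {poly 'F_p}))%N].
Proof.
rewrite /g; case: arg_minnP; first exact: h0S.
by move=> h /andP [h1 h2] hmin; split.
Qed.

Lemma gdiv (f : {poly 'F_p}) : root (map_poly fK f) a -> g %| f.
Proof.
have [gnz rg gmin] := gP.
move=> rf; apply/modp_eq0P; apply/eqP; apply/negPn/negP => nz.
have rm : root (map_poly fK (f %% g)) a.
  move: rf; rewrite {1}(divp_eq f g) /root rmorphD rmorphM /= hornerD hornerM.
  by rewrite (rootP rg) mulr0 add0r.
have szm : (size (f %% g)%R < size g)%N by rewrite ltn_modp.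
have mT : (size (f %% g)%R <= N.+2)%N.
  apply: (leq_trans (ltnW szm)); rewrite /g; exact: size_npoly.
have := gmin (npolyp N.+2 (f %% g)); rewrite inE npolypK // nz rm => /(_ isT).
by rewrite leqNgt szm.
Qed.

Lemma root_ex : exists b : E, root (map_poly fE g) b.
Proof.
have [gnz rg gmin] := gP.
have dg : g %| 'X^N - 'X by apply: gdiv; have := h0S; rewrite inE /h0 npolypK ?XNX_size // => /andP [].
have : map_poly fE g %| \prod_(x : E) ('X - x%:P).
  rewrite -finField_genPoly -cardKE -/N.
  have -> : ('X^N - 'X : {poly E}) = map_poly fE ('X^N - 'X).
    by rewrite rmorphB /= map_polyXn map_polyX.
  by rewrite dvdp_map.
case/dvdp_prod_XsubC => m Hm.
case e: (mask m (index_enum E)) Hm => [|y s] Hm.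
  rewrite big_nil in Hm.
  have := eqp_size Hm; rewrite size_map_poly size_poly1 => /eqP /size_poly1P [c cnz ec].
  by move: rg; rewrite ec map_polyC rootC fmorph_eq0 (negbTE cnz).
by exists y; rewrite (eqp_root Hm) big_cons rootM root_XsubC eqxx.
Qed.

Variable b : E.
Hypothesis rb : root (map_poly fE g) b.

Lemma transfer f : root (map_poly fK f) a -> root (map_poly fE f) b.
Proof. by move/gdiv/divpK <-; rewrite rmorphM /= rootM rb orbT. Qed.

Definition rep (x : K) : {poly 'F_p} :=
  if [pick i : 'I_N | a ^+ i == x] is Some i then 'X^i else 0.

Lemma rep_ok x : (map_poly fK (rep x)).[a] = x.
Proof.
rewrite /rep; case: pickP => [i /eqP <-| H]; first by rewrite map_polyXn hornerXn.
rewrite rmorph0 horner0; apply/eqP; apply/negPn/negP => nx.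
rewrite eq_sym in nx; have [i ei] := prim_rootP pa (expN1 nx).
have := H (widen_ord (leq_pred N) i); by rewrite /= ei eqxx.
Qed.

Definition psi (x : K) : E := (map_poly fE (rep x)).[b].

Lemma psiD x y : psi (x + y) = psi x + psi y.
Proof.
have := @transfer (rep x + rep y - rep (x + y)).
rewrite /root !rmorphB !rmorphD /= !hornerE !rep_ok subrr eqxx => /(_ isT).
by rewrite subr_eq0 => /eqP.
Qed.

Lemma psiM x y : psi (x * y) = psi x * psi y.
Proof.
have := @transfer (rep x * rep y - rep (x * y)).
rewrite /root !rmorphB !rmorphM /= !hornerE !rep_ok subrr eqxx => /(_ isT).
by rewrite subr_eq0 => /eqP.
Qed.

Lemma psi1 : psi 1 = 1.
Proof.
have := @transfer (rep 1 - 1).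
rewrite /root !rmorphB !rmorph1 /= !hornerE !rep_ok subrr eqxx => /(_ isT).
by rewrite subr_eq0 => /eqP.
Qed.

Lemma psi_inj : injective psi.
Proof.
have psi0 : psi 0 = 0.
  have h := psiD 0 0; rewrite addr0 in h.
  have : psi 0 + psi 0 - psi 0 = psi 0 - psi 0 by rewrite -h.
  by rewrite addrK subrr.
have psiN x : psi (- x) = - psi x.
  apply/eqP; rewrite -subr_eq0 opprK addrC -psiD subrr psi0 //.
move=> x y e; apply/eqP; rewrite -subr_eq0; apply/negP => nz.
have h0' : psi (x - y) = 0 by rewrite psiD psiN e subrr.
have := psi1; rewrite -(mulVf (introN eqP (fun h => nz (introT eqP h)))) psiM h0' mulr0 => /esym/eqP.
by rewrite oner_eq0.
Qed.
End WithA.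

Lemma embed_ex : exists f : K -> E, [/\ (forall x y, f (x + y) = f x + f y),
  (forall x y, f (x * y) = f x * f y) & injective f].
Proof.
have [a pa] := prim_ex.
have [b rb] := root_ex a.
by exists (psi a b); split; [exact: (psiD pa rb) | exact: (psiM pa rb) | exact: (psi_inj pa rb)].
Qed.

End Embed.

Local Close Scope ring_scope.

Section RealPart.
Local Open Scope R_scope.

Lemma INR_expn (m n : nat) : INR (m ^ n)%N = INR m ^ n.
Proof. elim: n => [|n IH] //=; by rewrite expnS -multE mult_INR IH. Qed.

Lemma real_bound (r q : nat) : (1 <= r)%N -> (1 <= q)%N ->
  INR ((r.+1 * q ^ r.+1 * 2).+1)%N <=
      (Rplus
        (Rmult (Rdiv (INR (2 * r + 5)%N) (INR 3))
               (Rpower (INR q) (Rplus (Rdiv (INR (4 * r)%N) (INR 3)) (INR 1))))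
        (Rmult (INR (2 * r + 1)%N) (pow (INR q) (r + 1)))).
Proof.
move=> r1 q1.
set Q := INR q ^ (r + 1).
have hq1 : 1 <= INR q by move/leP/le_INR: q1.
have hQ : 1 <= Q by rewrite /Q; apply: pow_R1_Rle.
have hr : 1 <= INR r by move/leP/le_INR: r1.
have hP : Q <= Rpower (INR q) (INR (4 * r) / INR 3 + INR 1).
  rewrite /Q -Rpower_pow; last by lra.
  apply: Rle_Rpower => //.
  rewrite -multE mult_INR plus_INR /=; lra.
have eN : INR (r.+1 * q ^ r.+1 * 2).+1 = 2 * (INR r + 1) * Q + 1.
  rewrite S_INR -!multE !mult_INR INR_expn S_INR /Q addn1 /=; lra.
rewrite eN.
have h3 : (2 * INR r + 5) / 3 * Q <= (2 * INR r + 5) / 3 * Rpower (INR q) (INR (4 * r) / INR 3 + INR 1).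
  apply: Rmult_le_compat_l => //; lra.
have e1 : INR (2 * r + 5) = 2 * INR r + 5.
  rewrite -plusE -multE plus_INR mult_INR /=; lra.
have e2 : INR (2 * r + 1) = 2 * INR r + 1.
  rewrite -plusE -multE plus_INR mult_INR /=; lra.
have e3 : INR 3 = 3 by rewrite /=; lra.
rewrite e1 e2 e3; rewrite e3 in h3.
have hRQ : 1 <= INR r * Q by nra.
move: h3; set Pw := Rpower _ _ => h3.
apply: Rle_trans (_ : _ <= (2 * INR r + 5) / 3 * Q + (2 * INR r + 1) * Q) _; last exact: Rplus_le_compat_r.
nra.
Qed.
End RealPart.

Theorem theorem3p4 (p k q r : nat) (F K : finFieldType) :
  prime p -> odd p -> (0 < k)%N -> q = (p ^ k)%N ->
  #|F| = q -> (1 <= r)%N -> #|K| = (q ^ (2 * r + 1))%N ->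
  (exists mu : F, irreducible_poly ('X^(2 * r + 1) - mu%:P)%R) ->
  Rle (INR (chromatic_number (G_adj K)))
      (Rplus
        (Rmult (Rdiv (INR (2 * r + 5)) (INR 3))
               (Rpower (INR q) (Rplus (Rdiv (INR (4 * r)) (INR 3)) (INR 1))))
        (Rmult (INR (2 * r + 1)) (pow (INR q) (r + 1)))).
Proof.
move=> pP oddp k0 hq cF r1 cK [mu irr].
have t0 : (0 < 2 * r + 1)%N by rewrite addn1.
have hI : monic_irreducible_poly ('X^(2 * r + 1) - mu%:P)%R := (irr, monicXnsubC mu t0).
have chF : (p \in [pchar F])%R := card_finPcharP (etrans cF hq) pP.
have cE : #|{poly %/ ('X^(2 * r + 1) - mu%:P)%R with hI}| = (q ^ (2 * r + 1))%N.
  by rewrite card_qfpoly size_XnsubC // cF.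
have chK : (p \in [pchar K])%R by apply: (card_finPcharP _ pP); rewrite cK hq -expnM.
have chE : (p \in [pchar {poly %/ ('X^(2 * r + 1) - mu%:P) with hI}])%R.
  by apply: (card_finPcharP _ pP); rewrite cE hq -expnM.
have two_nz : ((2%:R : F) != 0)%R.
  apply/negP => h2; have hd : (p %| 2)%N by rewrite (GRing.dvdn_pcharf chF).
  have hp2 : (p <= 2)%N := dvdn_leq (isT : (0 < 2)%N) hd.
  have hp1 := prime_gt1 pP.
  have e2 : p = 2%N by lia.
  by rewrite e2 in oddp.
have [psi [psiD psiM psiI]] := embed_ex chK chE (etrans cK (esym cE)).
have col := colorable_transfer psiD psiM psiI (@colorE F r mu hI r1 two_nz).
have := chrom_le col; rewrite card_colT cF => hle.
apply: Rle_trans (le_INR _ _ (leP hle)) _.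
apply: real_bound => //.
by rewrite hq expn_gt0 prime_gt0.
Qed.
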